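(* Let $D$ be an $n\times n$ positive definite density matrix and let $A$ be an $n\times n$ self-adjoint matrix. Assume that $f,g$ are standard functions such that $$g(x)\ge c\,\frac{(x-1)^2}{f(x)}\qquad\text{for all }x>0$$ for some constant $c>0$. Then $$\mathrm{qCov}^g_D(A,A)\ \ge\ c\,\gamma^f_D\big([D,A],[D,A]\big).$$
   Context: A function $f:(0,\infty)\to(0,\infty)$ is called standard if it is operator monotone, $f(1)=1$ and $f(t)=tf(t^{-1})$ for all $t>0$. For a standard $f$ define the mean $M_f(a,b):=bf(a/b)$ for $a,b>0$. For a positive definite density matrix $D$ (i.e. $D>0$, $\mathrm{Tr}\,D=1$), let $\mathbf L_D(X)=DX$, $\mathbf R_D(X)=XD$ on $n\times n$ complex matrices and $\mathbb J^f_D:=f(\mathbf L_D\mathbf R_D^{-1})\mathbf R_D$. The quantum Fisher information is $\gamma^f_D(A,B):=\mathrm{Tr}\,A^*(\mathbb J^f_D)^{-1}(B)$ and the quantum covariance is $\mathrm{qCov}^f_D(A,B):=\mathrm{Tr}\,A^*\mathbb J^f_D(B)-(\mathrm{Tr}\,DA^* )(\mathrm{Tr}\,DB)$. Equivalently, if $D=\mathrm{Diag}(\lambda_1,\dots,\lambda_n)$ with $\lambda_i>0$, then $\gamma^f_D(A,B)=\sum_{i,j}\frac{1}{M_f(\lambda_i,\lambda_j)}\overline{A_{ij}}B_{ij}$ and $\mathrm{qCov}^f_D(A,B)=\sum_{i,j}M_f(\lambda_i,\lambda_j)\overline{A_{ij}}B_{ij}-\big(\sum_i\lambda_i\overline{A_{ii}}\big)\big(\sum_i\lambda_iB_{ii}\big)$.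 $[D,A]=DA-AD$. *)

(* Defs.v *)
From HB Require Import structures.
From mathcomp Require Import all_boot all_order all_algebra.
From mathcomp Require Import complex.
From mathcomp Require Import reals sesquilinear spectral.
Set Implicit Arguments. Unset Strict Implicit. Unset Printing Implicit Defensive.
Import Order.TTheory GRing.Theory Num.Theory.
Local Open Scope ring_scope.

Section QuantumDefs.
Variable R : realType.
Local Notation C := (R[i]).

Definition toC (x : R) : C := (x%:C)%C.

Definition adjmx m n (X : 'M[C]_(m, n)) : 'M[C]_(n, m) := (X ^t* )%sesqui.

(* positive semidefinite / positive definite (over C, these imply self-adjointness) *)
Definition psdmx n (X : 'M[C]_n) : Prop :=
  forall v : 'cV[C]_n, 0 <= (adjmx v *m X *m v) 0 0.
Definition pdmx n (X : 'M[C]_n) : Prop :=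
  forall v : 'cV[C]_n, v != 0 -> 0 < (adjmx v *m X *m v) 0 0.

Definition diagC n (a : 'I_n -> R) : 'M[C]_n :=
  \matrix_(i, j) (toC (a i) *+ (i == j)).

(* Operator monotonicity on (0,oo): for all sizes m and all positive definite
   matrices X <= Y (Loewner order), f(X) <= f(Y), where the functional calculus
   of a self-adjoint matrix X = U Diag(a) U^* is U Diag(f a) U^*. *)
Definition operator_monotone (f : R -> R) : Prop :=
  forall m (U V : 'M[C]_m) (a b : 'I_m -> R),
    U \is unitarymx -> V \is unitarymx ->
    (forall i, 0 < a i) -> (forall i, 0 < b i) ->
    psdmx (V *m diagC b *m adjmx V - U *m diagC a *m adjmx U) ->
    psdmx (V *m diagC (fun i => f (b i)) *m adjmx V
           - U *m diagC (fun i => f (a i)) *m adjmx U).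

Definition standard (f : R -> R) : Prop :=
  [/\ forall t, 0 < t -> 0 < f t,
      operator_monotone f,
      f 1 = 1 &
      forall t, 0 < t -> f t = t * f t^-1].

Definition Mf (f : R -> R) (a b : R) : R := b * f (a / b).

(* Given a spectral decomposition D = U Diag(lam) U^*, the superoperator
   L_D R_D^{-1} is diagonal in the basis U E_ij U^* with eigenvalues lam_i/lam_j;
   hence J^f_D = f(L_D R_D^{-1}) R_D acts by multiplying the (i,j) entry of
   U^* B U by M_f(lam_i, lam_j), and (J^f_D)^{-1} by its inverse. *)
Definition Jf (f : R -> R) n (U : 'M[C]_n) (lam : 'I_n -> R) (B : 'M[C]_n)
  : 'M[C]_n :=
  U *m (\matrix_(i, j) (toC (Mf f (lam i) (lam j)) * (adjmx U *m B *m U) i j))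
    *m adjmx U.
Definition Jf_inv (f : R -> R) n (U : 'M[C]_n) (lam : 'I_n -> R) (B : 'M[C]_n)
  : 'M[C]_n :=
  U *m (\matrix_(i, j) (toC (Mf f (lam i) (lam j))^-1 * (adjmx U *m B *m U) i j))
    *m adjmx U.

Definition qFisher (f : R -> R) n (U : 'M[C]_n) (lam : 'I_n -> R)
  (A B : 'M[C]_n) : C :=
  \tr (adjmx A *m Jf_inv f U lam B).

Definition qCov (f : R -> R) n (D U : 'M[C]_n) (lam : 'I_n -> R)
  (A B : 'M[C]_n) : C :=
  \tr (adjmx A *m Jf f U lam B) - \tr (D *m adjmx A) * \tr (D *m B).

Definition commmx n (X Y : 'M[C]_n) : 'M[C]_n := X *m Y - Y *m X.

End QuantumDefs.

(* Main.v *)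
Require Import Defs.
From HB Require Import structures.
From mathcomp Require Import all_boot all_order all_algebra.
From mathcomp Require Import complex.
From mathcomp Require Import reals sesquilinear spectral.
From mathcomp Require Import ring lra.
Import Order.TTheory GRing.Theory Num.Theory Num.Def.
Local Open Scope ring_scope.
Section S.
Context {R : realType}.
Local Notation C := R[i].
Definition nrm (z : R[i]) : R := complex.Re z ^+ 2 + complex.Im z ^+ 2.
Lemma conj_mul (z : R[i]) (r : R) : conjC z * (toC r * z) = toC (r * nrm z).
Proof. case: z => a b. rewrite /toC /nrm /=. apply/eqP; rewrite eq_complex /=. apply/andP; split; apply/eqP; ring. Qed.

Lemma adjmxM m n p (X : 'M[C]_(m, n)) (Y : 'M[C]_(n, p)) :
  adjmx (X *m Y) = adjmx Y *m adjmx X.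
Proof. by rewrite /adjmx trmx_mul map_mxM. Qed.
Lemma adjmxK m n (X : 'M[C]_(m, n)) : adjmx (adjmx X) = X.
Proof. exact: trmxCK. Qed.
Lemma adjmxB m n (X Y : 'M[C]_(m, n)) : adjmx (X - Y) = adjmx X - adjmx Y.
Proof. by apply/matrixP=> i j; rewrite !mxE rmorphB. Qed.
Lemma adjmxE m n (X : 'M[C]_(m, n)) i j : adjmx X i j = conjC (X j i).
Proof. by rewrite !mxE. Qed.

Context {n : nat}.
Implicit Types (U X Y M : 'M[C]_n).
Lemma unit_r {U} : U \is unitarymx -> U *m adjmx U = 1%:M.
Proof. by move/unitarymxP. Qed.
Lemma unit_l {U} : U \is unitarymx -> adjmx U *m U = 1%:M.
Proof. by move=> hU; have := mulmxKtV (1%:M : 'M[C]_n) hU (erefl n); rewrite mul1mx. Qed.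

Lemma conj_back U M : U \is unitarymx -> adjmx U *m (U *m M *m adjmx U) *m U = M.
Proof. by move=> hU; rewrite !mulmxA (unit_l hU) mul1mx -mulmxA (unit_l hU) mulmx1. Qed.

Lemma tr_conj U X M : U \is unitarymx ->
  \tr (adjmx X *m (U *m M *m adjmx U)) = \tr (adjmx (adjmx U *m X *m U) *m M).
Proof.
move=> hU; rewrite !adjmxM adjmxK !mulmxA mxtrace_mulC !mulmxA //.
Qed.

Lemma tr_entry (r : 'I_n -> 'I_n -> R) Y :
  \tr (adjmx Y *m \matrix_(i, j) (toC (r i j) * Y i j))
  = toC (\sum_i \sum_j r j i * nrm (Y j i)).
Proof.
rewrite /mxtrace /toC raddf_sum; apply: eq_bigr => i _.
rewrite mxE raddf_sum; apply: eq_bigr => j _.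
by rewrite !mxE conj_mul.
Qed.
Lemma toCM (x y : R) : toC (x * y) = toC x * toC y.
Proof. rewrite /toC; apply/eqP; rewrite eq_complex /=; apply/andP; split; apply/eqP; ring. Qed.
Lemma toCB (x y : R) : toC (x - y) = toC x - toC y.
Proof. rewrite /toC; apply/eqP; rewrite eq_complex /=; apply/andP; split; apply/eqP; ring. Qed.
Lemma toC_sum (I : finType) (F : I -> R) : toC (\sum_i F i) = \sum_i toC (F i).
Proof.
rewrite /toC; elim/big_rec2: _ => [//|i x y _ <-].
apply/eqP; rewrite eq_complex /=; apply/andP; split; apply/eqP; ring.
Qed.

Lemma diagCE (a : 'I_n -> R) : diagC a = diag_mx (\row_i toC (a i)).
Proof. by apply/matrixP=> i j; rewrite !mxE. Qed.

Lemma herm_adj (A : 'M[C]_n) : A \is hermsymmx -> adjmx A = A.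
Proof. move/is_hermitianmxP => {2}->. by rewrite expr0 scale1r. Qed.

Lemma comm_conj U (lam : 'I_n -> R) (A : 'M[C]_n) : U \is unitarymx ->
  adjmx U *m commmx (U *m diagC lam *m adjmx U) A *m U =
  \matrix_(i, j) (toC (lam i - lam j) * (adjmx U *m A *m U) i j).
Proof.
move=> hU; rewrite /commmx mulmxBr mulmxBl.
have -> : adjmx U *m (U *m diagC lam *m adjmx U *m A) *m U
   = diagC lam *m (adjmx U *m A *m U).
  by rewrite !mulmxA (unit_l hU) mul1mx.
have -> : adjmx U *m (A *m (U *m diagC lam *m adjmx U)) *m U
   = (adjmx U *m A *m U) *m diagC lam.
  by rewrite !mulmxA -!(mulmxA _ (adjmx U) U) (unit_l hU) mulmx1.
rewrite diagCE mul_diag_mx mul_mx_diag; apply/matrixP => i j; rewrite !mxE toCB.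
by rewrite mulrBl [_ * toC _]mulrC.
Qed.

Lemma herm_diag (B : 'M[C]_n) i : adjmx B = B -> B i i = toC (complex.Re (B i i)).
Proof.
move=> /(congr1 (fun M => M i i)); rewrite adjmxE.
case: (B i i) => a b /= [] h; rewrite /toC; apply/eqP; rewrite eq_complex /= eqxx /=; apply/eqP; lra.
Qed.
Lemma adj_delta (i : 'I_n) : adjmx (delta_mx i (0 : 'I_1)) = delta_mx (0 : 'I_1) i :> 'M[C]_(1, n).
Proof. apply/matrixP=> a b; rewrite !mxE; case: eqP; case: eqP => //= _ _; by rewrite ?conjC1 ?conjC0. Qed.

Lemma lam_pos (D U : 'M[C]_n) (lam : 'I_n -> R) i : pdmx D -> U \is unitarymx ->
  D = U *m diagC lam *m adjmx U -> 0 < lam i.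
Proof.
move=> hD hU hDe; rewrite hDe in hD.
have hv : U *m delta_mx i (0 : 'I_1) != 0.
  apply/eqP => h; have := congr1 (fun v => (adjmx U *m v) i 0) h.
  by rewrite mulmxA (unit_l hU) mul1mx mulmx0 !mxE !eqxx /= => /eqP; rewrite oner_eq0.
have := hD _ hv; rewrite adjmxM adj_delta.
have -> : delta_mx (0 : 'I_1) i *m adjmx U *m (U *m diagC lam *m adjmx U) *m (U *m delta_mx i (0 : 'I_1))
   = delta_mx (0 : 'I_1) i *m diagC lam *m delta_mx i (0 : 'I_1).
  by rewrite !mulmxA -(mulmxA _ (adjmx U) U) (unit_l hU) mulmx1 -(mulmxA _ (adjmx U) U) (unit_l hU) mulmx1.
by rewrite -rowE -colE !mxE eqxx mulr1n /toC ltcR.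
Qed.

Lemma lam_sum (D U : 'M[C]_n) (lam : 'I_n -> R) : \tr D = 1 -> U \is unitarymx ->
  D = U *m diagC lam *m adjmx U -> \sum_i lam i = 1.
Proof.
move=> htr hU hDe; move: htr; rewrite hDe mxtrace_mulC mulmxA (unit_l hU) mul1mx.
rewrite diagCE mxtrace_diag.
under eq_bigr do rewrite mxE.
rewrite -toC_sum /toC => h; apply: complexI; exact: h.
Qed.
Lemma variance (lam b : 'I_n -> R) : (forall i, 0 <= lam i) -> \sum_i lam i = 1 ->
  (\sum_i lam i * b i) ^+ 2 <= \sum_i lam i * b i ^+ 2.
Proof.
move=> h0 h1; set m := \sum_i lam i * b i.
have E : \sum_i lam i * (b i - m) ^+ 2 = \sum_i lam i * b i ^+ 2 - m ^+ 2.
  have -> : \sum_i lam i * (b i - m) ^+ 2 =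
     \sum_i (lam i * b i ^+ 2 - ((2 * m) * (lam i * b i) - m ^+ 2 * lam i)).
    by apply: eq_bigr => i _; ring.
  rewrite !sumrB -!mulr_sumr h1 -/m; ring.
rewrite -subr_ge0 -E; apply: sumr_ge0 => i _; apply: mulr_ge0 => //; exact: sqr_ge0.
Qed.

Lemma real_ineq (f g : R -> R) (c : R) (lam b : 'I_n -> R) (N : 'I_n -> 'I_n -> R) :
  (forall i, 0 < lam i) -> \sum_i lam i = 1 ->
  (forall i j, 0 <= N i j) -> (forall i, N i i = b i ^+ 2) ->
  (forall t, 0 < t -> 0 < f t) -> g 1 = 1 -> 0 < c ->
  (forall x : R, 0 < x -> c * ((x - 1) ^+ 2 / f x) <= g x) ->
  c * (\sum_i \sum_j (Mf f (lam j) (lam i))^-1 * ((lam j - lam i) ^+ 2 * N j i))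
  <= \sum_i \sum_j Mf g (lam j) (lam i) * N j i - (\sum_i lam i * b i) ^+ 2.
Proof.
move=> hl hs hN hNb hf hg1 hc hfg.
have key : forall i j, (j == i)%:R * (lam i * b i ^+ 2) <=
   Mf g (lam j) (lam i) * N j i - c * ((Mf f (lam j) (lam i))^-1 * ((lam j - lam i) ^+ 2 * N j i)).
  move=> i j; rewrite /Mf; have [->|neq] := eqVneq j i.
    rewrite mulr1n divff ?hg1; last by apply/lt0r_neq0.
    by rewrite subrr expr0n /= !mul0r !mulr0 subr0 mulr1 mul1r hNb.
  rewrite mulr0n; set x := lam j / lam i.
  have li := hl i; have x0 : 0 < x by rewrite divr_gt0.
  have fx := hf x x0.
  have E : c * ((lam i * f x)^-1 * ((lam j - lam i) ^+ 2 * N j i))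
     = lam i * (c * ((x - 1) ^+ 2 / f x)) * N j i.
    have li0 : lam i != 0 by apply: lt0r_neq0.
    have fx0 : f x != 0 by apply: lt0r_neq0.
    have -> : lam j = x * lam i by rewrite /x divfK.
    field; by rewrite li0 fx0.
  rewrite /= mul0r subr_ge0 E; apply: ler_wpM2r => //; apply: ler_wpM2l; [exact: ltW | exact: hfg].
rewrite lerBrDr -lerBrDl mulr_sumr -sumrB.
apply: (le_trans (variance _ _ _ hs)); first by move=> i; exact: ltW.
apply: ler_sum => i _; rewrite mulr_sumr -sumrB.
apply: le_trans (ler_sum _ (fun j _ => key i j)).
rewrite (bigD1 i) //= eqxx mul1r big1 ?addr0 // => j /negPf ->; by rewrite mul0r.
Qed.
Lemma nrm_scale (r : R) (z : C) : nrm (toC r * z) = r ^+ 2 * nrm z.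
Proof. case: z => a b; rewrite /nrm /toC /=; ring. Qed.
Lemma nrm_ge0 (z : C) : 0 <= nrm z.
Proof. by rewrite /nrm addr_ge0 ?sqr_ge0. Qed.

Lemma trDA (U A : 'M[C]_n) (lam : 'I_n -> R) :
  adjmx (adjmx U *m A *m U) = adjmx U *m A *m U ->
  \tr (U *m diagC lam *m adjmx U *m A) =
  toC (\sum_i lam i * complex.Re ((adjmx U *m A *m U) i i)).
Proof.
move=> hB; rewrite -!mulmxA mxtrace_mulC -!mulmxA.
have -> : adjmx U *m (A *m U) = adjmx U *m A *m U by rewrite mulmxA.
rewrite diagCE mul_diag_mx toC_sum /mxtrace; apply: eq_bigr => i _.
by rewrite mxE [X in _ * X = _](herm_diag _ i hB) mxE toCM.
Qed.
End S.

Theorem theorem1 (R : realType) (n : nat) (f g : R -> R) (c : R)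
  (D A U : 'M[R[i]]_n) (lam : 'I_n -> R) :
  pdmx D -> \tr D = 1 ->
  U \is unitarymx -> D = U *m diagC lam *m adjmx U ->
  A \is hermsymmx ->
  standard f -> standard g ->
  0 < c ->
  (forall x : R, 0 < x -> c * ((x - 1) ^+ 2 / f x) <= g x) ->
  toC c * qFisher f U lam (commmx D A) (commmx D A) <= qCov g D U lam A A.
Proof.
move=> hD htr hU hDe hA [hf _ _ _] [_ _ hg1 _] hc hfg.
have hl : forall i, 0 < lam i by move=> i; exact: (@lam_pos R n D U lam i hD hU hDe).
have hs := @lam_sum R n D U lam htr hU hDe.
have hB : adjmx (adjmx U *m A *m U) = adjmx U *m A *m U.
  by rewrite !adjmxM adjmxK (herm_adj _ hA) mulmxA.
rewrite /qFisher /qCov /Jf_inv /Jf !tr_conj // !tr_entry (herm_adj _ hA) hDe trDA //.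
under eq_bigr do under eq_bigr do rewrite comm_conj // mxE nrm_scale.
rewrite -!toCM -toCB /toC lecR -expr2.
apply: real_ineq => //.
- by move=> i j; apply: nrm_ge0.
- move=> i; have := herm_diag _ i hB; case: (_ i i) => a b /= [] ->; rewrite /nrm /=; ring.
Qed.
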